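(* Let $G$ be a finite simple graph, let $t<0$ and $k>0$ be integers, and write $k=i-mt$ with integers $m\ge 0$ and $1\le i\le -t$. Consider the following procedure: set $H:=G$; for $j=0,1,\ldots,m$ (in this order), let $H$ be replaced by the subgraph of $H$ induced by those vertices whose degree in the current graph $H$ is at least $i-jt$ (i.e., all vertices of degree smaller than $i-jt$ in $H$ are deleted simultaneously); output the final $H$. Let $G_0\ge G_1\ge G_2\ge\cdots$ be the maximal D-chain of order $t$ of $G$ (with $G_r=\emptyset$ for $r$ larger than its length). Then the output $H$ equals $G_k$.
   Context: All graphs are finite, without loops or multiple edges. For graphs $H,G$ write $H\le G$ if $H$ is a subgraph of $G$, and $H<G$ if $H\le G$ and $H\ne G$. Let $t$ be an integer. A D-chain of order $t$ of $G$ is a chain $L\colon G_0\ge G_1\ge\cdots\ge G_k$ of nonempty subgraphs of $G$ with $G_0=G$, where $G_i$ is a vertex-induced subgraph of $G_{i-1}$ for $1\le i\le k$, such that for every $0\le i\le k$, every vertex $v$ of $G_i$ has at least $i$ neighbors in $G_j$, where $j=\max\{0,i+t\}$. The number $k$ is the length of the chain. A D-chain $L\colon G_0\ge\cdots\ge G_k$ of order $t$ is maximal if (i) there is no D-chain of order $t$ of $G$ of length greater than $k$, and (ii) there is no D-chain $L'\colon G'_0\ge\cdots\ge G'_k$ of order $t$ of $G$ with $G_i<G'_i$ for some $1\le i\le k$. For $t\le 0$ the maximal D-chain of order $t$ exists and is unique. *)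

(* Defs.v *)
From HB Require Import structures.
From mathcomp Require Import all_boot all_order all_algebra.
Set Implicit Arguments. Unset Strict Implicit. Unset Printing Implicit Defensive.
Import Order.TTheory GRing.Theory Num.Theory.

(* A finite simple graph is a symmetric irreflexive relation e on a finType T.
   Vertex-induced subgraphs of G are represented by their vertex sets
   {set T}; for induced subgraphs of G, "subgraph" is set inclusion. *)

Definition nbrs (T : finType) (e : rel T) (A : {set T}) (v : T) : nat :=
  #|[set u in A | e v u]|.

Definition didx (t : int) (i : nat) : nat := absz (Num.max 0%R (i%:Z + t)%R).

Definition Dchain (T : finType) (e : rel T) (t : int) (len : nat)
    (c : nat -> {set T}) : Prop :=
  [/\ c 0 = [set: T],
      (forall i, 1 <= i <= len -> c i \subset c i.-1),
      (forall i, i <= len -> c i != set0) &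
      (forall i, i <= len -> forall v, v \in c i ->
          i <= nbrs e (c (didx t i)) v)].

Definition maximal_Dchain (T : finType) (e : rel T) (t : int) (len : nat)
    (c : nat -> {set T}) : Prop :=
  [/\ Dchain e t len c,
      (forall len' c', Dchain e t len' c' -> len' <= len) &
      (forall c', Dchain e t len c' ->
          ~ (exists i, (1 <= i <= len) /\ c i \proper c' i))].

Definition chain_at (T : finType) (len : nat) (c : nat -> {set T}) (r : nat)
  : {set T} := if r <= len then c r else set0.

Definition peel_step (T : finType) (e : rel T) (d : int) (H : {set T})
  : {set T} := [set v in H | (d <= (nbrs e H v)%:Z)%R].

Definition procedure (T : finType) (e : rel T) (t : int) (i m : nat)
  : {set T} :=
  foldl (fun H j => peel_step e (i%:Z - j%:Z * t)%R H) [set: T] (iota 0 m.+1).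

(* Main.v *)
Require Import Defs.
From HB Require Import structures.
From mathcomp Require Import all_boot all_order all_algebra.
From mathcomp Require Import zify.
Import Order.TTheory GRing.Theory Num.Theory.

Section Aux.
Variables (T : finType) (e : rel T).

Definition pk (d : nat) (H : {set T}) : {set T} := [set v in H | d <= nbrs e H v].

Lemma nbrsS (A B : {set T}) v : A \subset B -> nbrs e A v <= nbrs e B v.
Proof.
move=> sAB; apply: subset_leq_card; apply/subsetP => u; rewrite !inE.
by case/andP => /(subsetP sAB) -> ->.
Qed.

Lemma pk_sub d H : pk d H \subset H.
Proof. by apply/subsetP => v; rewrite inE => /andP[]. Qed.

Variables (i s : nat).

Fixpoint P (j : nat) : {set T} :=
  match j with 0 => pk i setT | j'.+1 => pk (i + j * s) (P j') end.

Lemma P_anti a b : a <= b -> P b \subset P a.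
Proof.
elim: b => [|b IH]; first by rewrite leqn0 => /eqP ->.
rewrite leq_eqVlt => /orP[/eqP -> //|]; rewrite ltnS => /IH.
exact: subset_trans (pk_sub _ _).
Qed.

End Aux.
Arguments P {T} e i s j.
Arguments pk {T} e d H.
Arguments P_anti {T} e i s a b.
Arguments pk_sub {T} e d H.
Arguments nbrsS {T} e A B v.

Local Open Scope ring_scope.

Theorem theorem1 (T : finType) (e : rel T) (e_sym : symmetric e)
    (e_irr : irreflexive e) (t : int) (k : nat) (i m : nat)
    (ht : (t < 0)%R) (hk : (0 < k)%N) (hi1 : (1 <= i)%N) (hi2 : (i%:Z <= - t)%R)
    (hkim : k%:Z = (i%:Z - m%:Z * t)%R)
    (len : nat) (c : nat -> {set T}) (hmax : maximal_Dchain e t len c) :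
  procedure e t i m = chain_at len c k.
Proof.
case: t ht hi2 hkim hmax => [n //|n] _ hi2 hkim hmax.
set s := n.+1.
have hk' : k = (i + m * s)%N by move: hkim; rewrite NegzE; lia.
have his : (i <= s)%N by move: hi2; rewrite NegzE; lia.
have hdidx : forall r, didx (Negz n) r = (r - s)%N.
  by move=> r; rewrite /didx NegzE; lia.
have hproc : forall j, foldl (fun H j => peel_step e (i%:Z - j%:Z * Negz n)%R H)
     [set: T] (iota 0 j.+1) = P e i s j.
  have hps : forall j H, peel_step e (i%:Z - j%:Z * Negz n)%R H = pk e (i + j * s) H.
    move=> j H; apply/setP => v; rewrite !inE.
    have -> : (i%:Z - j%:Z * Negz n)%R = (i + j * s)%N%:Z by rewrite NegzE; lia.
    by rewrite lez_nat.
  elim=> [|j IH]; first by rewrite /= hps mul0n addn0.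
  by rewrite -addn1 iotaD foldl_cat IH /= hps add0n.
rewrite /procedure hproc.
case: hmax => [[c0 cmon cne cdeg] hlen hprop].
have cmon' : forall a b, (a <= b <= len)%N -> c b \subset c a.
  move=> a b /andP[hab hb]; elim: b hab hb => [|b IH]; first by rewrite leqn0 => /eqP ->.
  rewrite leq_eqVlt => /orP[/eqP -> //|]; rewrite ltnS => hab hb.
  apply: subset_trans (IH hab (ltnW hb)); apply: (cmon b.+1); by rewrite /= hb.
have part1 : forall j, (i + j * s <= len)%N -> c (i + j * s)%N \subset P e i s j.
  elim=> [|j IH] hj.
    move: hj; rewrite mul0n addn0 => hj.
    apply/subsetP => v hv; rewrite /= inE in_setT /=.
    have := cdeg i hj v hv.
    rewrite hdidx (_ : (i - s = 0)%N) ?c0 //; lia.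
  have hj' : (i + j * s <= len)%N by lia.
  apply/subsetP => v hv /=; rewrite inE.
  have hsub : c (i + j.+1 * s)%N \subset c (i + j * s)%N by apply: cmon'; lia.
  have hvP := subsetP (subset_trans hsub (IH hj')) v hv.
  rewrite hvP /=.
  have := cdeg _ hj v hv; rewrite hdidx (_ : (i + j.+1 * s - s = i + j * s)%N); last lia.
  move=> h; apply: leq_trans h _; apply: nbrsS; exact: IH.
rewrite /chain_at.
case: (boolP (P e i s m == set0)) => [/eqP hP0 | hPne].
  case: ifP => // hkl; have := part1 m; rewrite -hk' => /(_ hkl); rewrite hP0.
  by rewrite subset0 => /eqP h; have := cne k hkl; rewrite h eqxx.
have exj : forall r : nat, exists j, (r <= i + j * s)%N by move=> r; exists r; lia.
pose jof r := ex_minn (exj r).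
have jofb : forall r, (r <= i + jof r * s)%N.
  by move=> r; rewrite /jof; case: ex_minnP.
have jofd : forall r j, (r <= i + j * s)%N -> (jof r <= j)%N.
  by move=> r j h; rewrite /jof; case: ex_minnP => x _ /(_ j h).
pose c' r := if r == 0%N then [set: T] else P e i s (jof r).
have c'P : forall r, (r <= k)%N -> P e i s m \subset c' r.
  move=> r hr; rewrite /c'; case: ifP => _; first exact: subsetT.
  apply: P_anti; apply: jofd; lia.
have c'D : Dchain e (Negz n) k c'.
  split => //.
  - move=> r /andP[h1 h2]; rewrite /c'; case: r h1 h2 => // r _ _ /=.
    case: ifP => _; first exact: subsetT.
    apply: P_anti; apply: jofd; exact: leq_trans (jofb r.+1).
  - move=> r hr; apply/negP => /eqP h; move: hPne; apply/negP; rewrite negbK.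
    by rewrite -subset0 -h c'P.
  - move=> r hr v; rewrite hdidx /c'; case: ifP => [/eqP -> //|r0].
    case hj: (jof r) => [|j0] /=.
    + rewrite inE in_setT /= => hv.
      rewrite (_ : (r - s)%N = 0%N) /=; last by have := jofb r; rewrite hj; lia.
      apply: leq_trans _ hv; have := jofb r; rewrite hj; lia.
    + rewrite inE => /andP[_ hv].
      have hr' := jofb r; rewrite hj in hr'.
      apply: leq_trans hr' _; apply: leq_trans hv _; apply: nbrsS.
      case: ifP => _; first exact: subsetT.
      apply: P_anti; apply: jofd; have := jofb r; rewrite hj; lia.
have hkl : (k <= len)%N := hlen _ _ c'D.
pose c'' r := if (r <= k)%N then c r :|: c' r else c r.
have cc'' : forall r, c r \subset c'' r.
  by move=> r; rewrite /c''; case: ifP => _; [exact: subsetUl|].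
have c''D : Dchain e (Negz n) len c''.
  split.
  - by rewrite /c'' leq0n /c' /= setUT.
  - move=> r hr; rewrite {1}/c''; case: ifP => hrk.
    + rewrite /c'' (_ : (r.-1 <= k)%N = true); last lia.
      apply: setUSS; first exact: cmon.
      by case: c'D => _ hm _ _; apply: hm; lia.
    + exact: subset_trans (cmon r hr) (cc'' _).
  - move=> r hr; apply/negP => /eqP h; have := cne r hr.
    by rewrite -subset0 -h cc''.
  - move=> r hr v; rewrite {1}/c''; case: ifP => hrk.
    + rewrite inE => /orP[hv|hv].
      * apply: leq_trans (cdeg r hr v hv) _; exact: nbrsS.
      * case: c'D => _ _ _ /(_ r hrk v hv) h; apply: leq_trans h _; apply: nbrsS.
        rewrite /c'' hdidx (_ : (r - s <= k)%N = true); last lia.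
        exact: subsetUr.
    + move=> hv; apply: leq_trans (cdeg r hr v hv) _; exact: nbrsS.
rewrite hkl; apply/eqP; rewrite eqEsubset; apply/andP; split.
  apply: subset_trans (c'P k (leqnn k)) _.
  case: (boolP (c k == c'' k)) => [/eqP hE|hne].
    by rewrite hE /c'' leqnn subsetUr.
  exfalso; apply: (hprop _ c''D); exists k; split; first by rewrite hk hkl.
  by rewrite properEneq hne cc''.
by rewrite hk'; apply: part1; rewrite -hk'.
Qed.
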